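(* Let $M\subset\mathcal P(\Omega_1)$, $N\subset\mathcal P(\Omega_2)$ be submanifolds, $\varphi:M\to N$ and $\psi:N\to M$ Markov maps with $\psi\circ\varphi=\mathrm{id}_M$, and $p\in M$, $q\in N$ with $q=\varphi(p)$, $p=\psi(q)$. Then the Fisher metrics satisfy $$g_{M,p}(X_p,\psi_{*,q}Y_q)=g_{N,q}(\varphi_{*,p}X_p,Y_q)\quad\forall X_p\in T_p(M),\ Y_q\in T_q(N),$$ i.e. $\psi_{*,q}=(\varphi_{*,p})^\dagger$ (adjoint with respect to $g_{M,p}$ and $g_{N,q}$). Equivalently, for the Fisher co-metrics, $g_{M,p}(\alpha_p,\varphi^*_p\beta_q)=g_{N,q}(\psi^*_q\alpha_p,\beta_q)$ for all $\alpha_p\in T^*_p(M)$, $\beta_q\in T_q^*(N)$. Moreover $(\psi_{*,q})^\dagger\circ\psi_{*,q}=\varphi_{*,p}\circ\psi_{*,q}$ is the orthogonal projector of $T_q(N)$ onto $\varphi_{*,p}(T_p(M))$.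
   Context: $\mathcal P(\Omega)$ is the manifold of strictly positive probability distributions on a finite set $\Omega$. A Markov map $\mathcal P(\Omega_1)\to\mathcal P(\Omega_2)$ is a map $p\mapsto\sum_xW(\cdot|x)p(x)$ for a channel $W$ with $\forall y\,\exists x\,W(y|x)>0$; a Markov map $M\to N$ between submanifolds is the restriction to $M$ of such a map. $\varphi_{*,p}$ is the differential at $p$, $\varphi^*_p$ its transpose. The Fisher metric on $\mathcal P(\Omega)$ is $g_p(X,Y)=\sum_\omega X^{(m)}(\omega)Y^{(m)}(\omega)/p(\omega)$ with $X^{(m)}$ the m-representation (identification of $T_p(\mathcal P(\Omega))$ with $\{B:\sum B=0\}$); $g_M,g_N$ are its restrictions, and the same symbols denote the dual inner products on cotangent spaces (Fisher co-metrics). *)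

(* Defs.v *)
From HB Require Import structures.
From mathcomp Require Import all_boot all_order all_algebra.
From mathcomp Require Import all_classical all_reals all_analysis.
Set Implicit Arguments. Unset Strict Implicit. Unset Printing Implicit Defensive.
Import Order.TTheory GRing.Theory Num.Theory.
Import numFieldNormedType.Exports.
Local Open Scope classical_set_scope.
Local Open Scope ring_scope.

(* Omega = 'I_n; a (signed) measure / tangent vector in m-representation is a
   column vector 'cV[R]_n, its value at omega being  X omega 0. *)

Section Defs.
Variable R : realType.

Definition simplex (n : nat) : set 'cV[R]_n :=
  [set p | (forall i, 0 < p i 0) /\ \sum_i p i 0 = 1].

(* channel W(y|x) = W y x, y in Omega2, x in Omega1, with every y reachable *)
Definition markov_channel (n1 n2 : nat) (W : 'M[R]_(n2, n1)) : Prop :=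
  (forall y x, 0 <= W y x) /\ (forall x, \sum_y W y x = 1) /\
  (forall y, exists x, 0 < W y x).

Definition markov_map (n1 n2 : nat) (M : set 'cV[R]_n1) (N : set 'cV[R]_n2)
  (W : 'M[R]_(n2, n1)) : Prop :=
  markov_channel W /\ (forall p, M p -> N (W *m p)).

Definition iter_dir (k n : nat) (vs : seq 'cV[R]_k) (f : 'cV[R]_k -> 'cV[R]_n)
  : 'cV[R]_k -> 'cV[R]_n :=
  foldr (fun v g => fun x => derive g x v) f vs.

Definition smooth_on (k n : nat) (U : set 'cV[R]_k) (f : 'cV[R]_k -> 'cV[R]_n)
  : Prop :=
  (forall vs v x, U x -> derivable (iter_dir vs f) x v) /\
  (forall vs, {within U, continuous (iter_dir vs f)}).

(* embedded smooth submanifold of P(Omega) (= embedded submanifold of R^Omega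
   contained in P(Omega)): every point has a local smooth parametrization which
   is an injective immersion and a homeomorphism onto an open piece of M *)
Definition submanifold (n : nat) (M : set 'cV[R]_n) : Prop :=
  M `<=` @simplex n /\
  forall p, M p ->
    exists k (U : set 'cV[R]_k) (f : 'cV[R]_k -> 'cV[R]_n) (V : set 'cV[R]_n),
      [/\ open U, open V, V p, (f @` U = M `&` V) & smooth_on U f] /\
      [/\ (forall x v, U x -> derive f x v = 0 -> v = 0),
          (forall x y, U x -> U y -> f x = f y -> x = y) &
          (forall x, U x -> forall e : R, 0 < e ->
              exists2 d : R, 0 < d &
                forall y, U y -> `|f y - f x| < d -> `|y - x| < e)].

Definition tangent (n : nat) (M : set 'cV[R]_n) (p : 'cV[R]_n) : set 'cV[R]_n :=
  [set X | exists g : R -> 'cV[R]_n,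
     [/\ g 0 = p, \forall t \near (0 : R), M (g t),
         derivable g 0 1 & derive g 0 1 = X]].

Definition markov_push (n1 n2 : nat) (W : 'M[R]_(n2, n1)) (X : 'cV[R]_n1)
  : 'cV[R]_n2 := W *m X.

Definition fisher (n : nat) (p X Y : 'cV[R]_n) : R :=
  \sum_i X i 0 * Y i 0 / p i 0.

(* X in T_p(M) is the g_{M,p}-dual (Riesz) vector of the covector alpha on
   T_p(M); the Fisher co-metric is g(alpha, beta) = g(X_alpha, X_beta). *)
Definition dual_vec (n : nat) (M : set 'cV[R]_n) (p : 'cV[R]_n)
  (alpha : 'cV[R]_n -> R) (X : 'cV[R]_n) : Prop :=
  tangent M p X /\ forall Z, tangent M p Z -> alpha Z = fisher p X Z.

Definition orth_projector (n : nat) (g : 'cV[R]_n -> 'cV[R]_n -> R)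
  (T S : set 'cV[R]_n) (P : 'cV[R]_n -> 'cV[R]_n) : Prop :=
  [/\ forall Y, T Y -> S (P Y),
      forall Z, S Z -> P Z = Z &
      forall Y Z, T Y -> S Z -> g (Y - P Y) Z = 0].

End Defs.

(* Main.v *)
Require Import Defs.
From HB Require Import structures.
From mathcomp Require Import all_boot all_order all_algebra.
From mathcomp Require Import all_classical all_reals all_analysis.
Import Order.TTheory GRing.Theory Num.Theory.
Import numFieldNormedType.Exports.
Local Open Scope classical_set_scope.
Local Open Scope ring_scope.

From mathcomp Require Import ring lra.

Section Alg.

Variable R : realType.

Lemma fisherC n (p X Y : 'cV[R]_n) : fisher p X Y = fisher p Y X.
Proof. by apply: eq_bigr => i _; rewrite (mulrC (X i 0)). Qed.

Lemma fisherBl n (p X Y Z : 'cV[R]_n) : fisher p (X - Y) Z = fisher p X Z - fisher p Y Z.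
Proof.
rewrite /fisher -sumrB; apply: eq_bigr => i _; rewrite !mxE; ring.
Qed.

Lemma fisher_quad n (p a b : 'cV[R]_n) (t : R) :
  fisher p (a + t *: b) (a + t *: b) =
  fisher p a a + 2 * t * fisher p a b + t ^+ 2 * fisher p b b.
Proof.
rewrite /fisher !mulr_sumr -!big_split /=; apply: eq_bigr => i _; rewrite !mxE; ring.
Qed.

Lemma fisher_mono n1 n2 (W : 'M[R]_(n2, n1)) (q Z : 'cV[R]_n1) :
  (forall y x, 0 <= W y x) -> (forall x, \sum_y W y x = 1) ->
  (forall i, 0 < q i 0) -> (forall x, 0 < (W *m q) x 0) ->
  fisher (W *m q) (W *m Z) (W *m Z) <= fisher q Z Z.
Proof.
move=> W0 W1 q0 P0.
rewrite /fisher.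
have step : forall x, (W *m Z) x 0 * (W *m Z) x 0 / (W *m q) x 0 <=
    \sum_y W x y * (Z y 0 * Z y 0 / q y 0).
  move=> x.
  set m := (W *m Z) x 0; set P := (W *m q) x 0.
  set S := \sum_y _.
  set c := m / P.
  have hP : P != 0 by rewrite (gt_eqF (P0 x)).
  have h0 : 0 <= \sum_y W x y * q y 0 * (Z y 0 / q y 0 - c) ^+ 2.
    apply: sumr_ge0 => y _; apply: mulr_ge0; last exact: sqr_ge0.
    by apply: mulr_ge0 => //; apply: ltW.
  have e1 : \sum_y W x y * q y 0 * (Z y 0 / q y 0 - c) ^+ 2 =
     S - 2 * c * m + c ^+ 2 * P.
    rewrite /m /P !mxE !mulr_sumr -sumrB -big_split /=.
    apply: eq_bigr => y _.
    have hq : q y 0 != 0 by rewrite (gt_eqF (q0 y)).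
    by field.
  rewrite e1 /c in h0.
  have e2 : S - 2 * (m / P) * m + (m / P) ^+ 2 * P = S - m * m / P by field.
  by rewrite e2 subr_ge0 in h0.
apply: le_trans (ler_sum _ (fun x _ => step x)) _.
rewrite exchange_big /=; apply: ler_sum => y _.
by rewrite -mulr_suml W1 mul1r.
Qed.

Lemma quad0 (b c : R) : (forall t : R, 0 <= 2 * t * b + t ^+ 2 * c) -> b = 0.
Proof.
move=> H.
set s := `|c| + 1.
have s0 : 0 < s by rewrite /s ltr_pwDr // normr_ge0.
have hc : c - 2 * s < 0.
  rewrite /s; have := ler_norm c; have := normr_ge0 c; lra.
have sn : s != 0 by rewrite (gt_eqF s0).
have Ee : 2 * (- b / s) * b + (- b / s) ^+ 2 * c = b ^+ 2 * (c - 2 * s) / s ^+ 2.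
  by field.
have := H (- b / s).
rewrite Ee => h.
have h2 : 0 <= b ^+ 2 * (c - 2 * s).
  by move: h; rewrite pmulr_lge0 // invr_gt0 exprn_gt0.
have : b ^+ 2 <= 0 by nra.
by move=> hb; apply/eqP; rewrite -sqrf_eq0 eq_le hb sqr_ge0.
Qed.
End Alg.


Lemma mx_derive (R : realType) n1 n2 (W : 'M[R]_(n2,n1)) (g : R -> 'cV[R]_n1) :
  derivable g 0 1 ->
  derivable (fun t => W *m g t) 0 1 /\ derive (fun t => W *m g t) 0 1 = W *m derive g 0 1.
Proof.
move=> dg.
have hg : forall j, derivable (fun t => g t j 0) 0 1.
  by move=> j; move/derivable_mxP: dg; apply.
have key : forall i, (fun t => (W *m g t) i 0) =
    \sum_(j < n1) (W i j \*: (fun t => g t j 0)).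
  move=> i; apply/funext => t; rewrite fct_sumE mxE; apply: eq_bigr => j _.
  by [].
have di : forall i, derivable (fun t => (W *m g t) i 0) 0 1.
  move=> i; rewrite key; apply: derivable_sum => j; exact: derivableZ.
split.
  by apply/derivable_mxP => i j; rewrite ord1.
rewrite derive_mx; last by apply/derivable_mxP => i j; rewrite ord1.
apply/matrixP => i j; rewrite !mxE ord1 key derive_sum; last first.
  by move=> k; exact: derivableZ.
rewrite (derive_mx dg); apply: eq_bigr => k _; rewrite deriveZ // mxE.
by [].
Qed.

Arguments mx_derive {R n1 n2} W {g}.
Section Main.
Variable R : realType.

Lemma tangent_push n1 n2 (M : set 'cV[R]_n1) (N : set 'cV[R]_n2) (W : 'M[R]_(n2,n1)) p X :
  (forall r, M r -> N (W *m r)) -> tangent M p X -> tangent N (W *m p) (W *m X).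
Proof.
move=> hMN [g [g0 nM dg dgX]]; exists (fun t => W *m g t); split.
- by rewrite g0.
- by apply: filterS nM => t /hMN.
- by case: (mx_derive W dg).
- by rewrite (mx_derive W dg).2 dgX.
Qed.

Lemma tangent_id n1 n2 (M : set 'cV[R]_n1) (W1 : 'M[R]_(n2,n1)) (W2 : 'M[R]_(n1,n2)) p X :
  (forall r, M r -> W2 *m (W1 *m r) = r) -> tangent M p X -> W2 *m (W1 *m X) = X.
Proof.
move=> hid [g [g0 nM dg dgX]].
rewrite mulmxA -dgX -(mx_derive (W2 *m W1) dg).2.
apply: near_eq_derive; apply: filterS nM => t Mt.
by rewrite -mulmxA hid.
Qed.

Lemma adjoint n1 n2 (W1 : 'M[R]_(n2,n1)) (W2 : 'M[R]_(n1,n2)) (p X : 'cV[R]_n1) (q Y : 'cV[R]_n2) :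
  markov_channel W1 -> markov_channel W2 ->
  (forall i, 0 < p i 0) -> (forall i, 0 < q i 0) ->
  q = W1 *m p -> p = W2 *m q -> W2 *m (W1 *m X) = X ->
  fisher p X (W2 *m Y) = fisher q (W1 *m X) Y.
Proof.
move=> [A0 [A1 _]] [B0 [B1 _]] p0 q0 hqp hpq WX.
set u := W1 *m X.
have h1 : fisher q u u <= fisher p X X.
  rewrite hqp; apply: fisher_mono => //; by rewrite -hqp.
have h2 : fisher p X X <= fisher q u u.
  have := @fisher_mono _ _ _ W2 q u B0 B1 q0; rewrite -hpq /u WX; exact.
suff : fisher q u Y - fisher p X (W2 *m Y) = 0 by lra.
apply: (@quad0 _ _ (fisher q Y Y - fisher p (W2 *m Y) (W2 *m Y))) => t.
have := @fisher_mono _ _ _ W2 q (u + t *: Y) B0 B1 q0.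
rewrite -hpq mulmxDr -scalemxAr /u WX !fisher_quad -/u.
move=> /(_ p0); move: h1 h2; lra.
Qed.

End Main.
Arguments tangent_push {R n1 n2 M N W p X}.
Arguments tangent_id {R n1 n2 M W1 W2 p X}.
Arguments adjoint {R n1 n2 W1 W2 p X q Y}.
Arguments fisherC {R n}.
Arguments fisherBl {R n}.

Theorem mainTheorem11 (R : realType) (n1 n2 : nat)
  (M : set 'cV[R]_n1) (N : set 'cV[R]_n2)
  (hM : submanifold M) (hN : submanifold N)
  (W1 : 'M[R]_(n2, n1)) (W2 : 'M[R]_(n1, n2))
  (hphi : markov_map M N W1) (hpsi : markov_map N M W2)
  (hid : forall r, M r -> W2 *m (W1 *m r) = r)
  (p : 'cV[R]_n1) (q : 'cV[R]_n2) (hp : M p) (hq : N q)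
  (hqp : q = W1 *m p) (hpq : p = W2 *m q) :
  (* psi_{*,q} is the adjoint of phi_{*,p} *)
  (forall X Y, tangent M p X -> tangent N q Y ->
     fisher p X (markov_push W2 Y) = fisher q (markov_push W1 X) Y) /\
  (* co-metric version: phi^*_p beta = beta o phi_{*,p},
     psi^*_q alpha = alpha o psi_{*,q} *)
  (forall (alpha : 'cV[R]_n1 -> R) (beta : 'cV[R]_n2 -> R) A C D B,
     dual_vec M p alpha A ->
     dual_vec M p (fun X => beta (markov_push W1 X)) C ->
     dual_vec N q (fun Y => alpha (markov_push W2 Y)) D ->
     dual_vec N q beta B ->
     fisher p A C = fisher q D B) /\
  (* phi_{*,p} o psi_{*,q} is the orthogonal projector of T_q(N)
     onto phi_{*,p}(T_p(M)) *)
  orth_projector (fisher q) (tangent N q)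
    (markov_push W1 @` tangent M p)
    (fun Y => markov_push W1 (markov_push W2 Y)).

Proof.
have pos : forall n (S : set 'cV[R]_n) r, submanifold S -> S r -> forall i, 0 < r i 0.
  by move=> n S r [hS _] /hS [].
have p0 := pos _ _ _ hM hp; have q0 := pos _ _ _ hN hq.
have [c1 mMN] := hphi; have [c2 mNM] := hpsi.
have adj : forall X Y, tangent M p X ->
     fisher p X (markov_push W2 Y) = fisher q (markov_push W1 X) Y.
  move=> X Y tX; apply: adjoint => //; exact: tangent_id hid tX.
have adj' : forall X Y, tangent M p X ->
     fisher p X (W2 *m Y) = fisher q (W1 *m X) Y := adj.
have t1 : forall X, tangent M p X -> tangent N q (W1 *m X).
  by move=> X tX; rewrite hqp; exact: tangent_push mMN tX.
have t2 : forall Y, tangent N q Y -> tangent M p (W2 *m Y).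
  by move=> Y tY; rewrite hpq; exact: tangent_push mNM tY.
split; [|split].
- by move=> X Y tX _; exact: adj.
- move=> alpha beta A C D B [tA hA] [tC hC] [tD hD] [tB hB].
  rewrite fisherC -hC // (hB _ (t1 _ tA)) fisherC.
  rewrite -hD // (hA _ (t2 _ tB)).
  by rewrite adj'.
- split.
  + move=> Y tY; exists (W2 *m Y) => //; exact: t2.
  + by move=> _ [X tX <-]; rewrite /markov_push (tangent_id hid tX).
  + move=> Y _ tY [X tX <-].
    rewrite /markov_push fisherBl.
    have e1 : fisher q Y (W1 *m X) = fisher p X (W2 *m Y).
      by rewrite fisherC adj'.
    have e2 : fisher q (W1 *m (W2 *m Y)) (W1 *m X) = fisher p (W2 *m Y) X.
      by rewrite -adj' ?(tangent_id hid tX) //; exact: t2.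
    by rewrite e1 e2 fisherC subrr.
Qed.
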